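(* Let $(X_1,\dots,X_n)$ be drawn from a product distribution $\mu$. For any $k$-pass streaming algorithm $\mathsf{M}$ on this stream, $$MIC(\mathsf{M},\mu)\ge\sum_{i=1}^k\sum_{j=1}^n\sum_{\ell=1}^j\mathrm I\big(\mathsf{M}_{(i,j)};X_\ell\mid\mathsf{M}_{(\le i,\ell-1)},\mathsf{M}_{(\le i-1,j)}\big)\ge MIC_{cond}(\mathsf{M},\mu).$$ Consequently $MIC_{cond}(\mathsf{M},\mu)\le ksn$, where $s$ is the number of bits of memory used by $\mathsf{M}$.
   Context: $\mathsf{M}$ may use private randomness (fresh independent randomness at each step). $\mathsf{M}_{(i,j)}$ is the memory state in pass $i$ after reading $j$ elements, $\mathsf{M}_{(1,0)}=\mathsf{M}_0$ is the start state, $\mathsf{M}_{(i+1,0)}=\mathsf{M}_{(i,n)}$, $\mathsf{M}_{(\le i,j)}=(\mathsf{M}_{(1,j)},\dots,\mathsf{M}_{(i,j)})$. $MIC(\mathsf{M},\mu)=\sum_{i=1}^{k}\sum_{j=1}^n\sum_{\ell=1}^{j}\mathrm I(\mathsf{M}_{(i,j)};X_\ell\mid \mathsf{M}_{(\le i,\ell-1)},\mathsf{M}_{(\le i-1,j)})+\sum_{i=1}^{k}\sum_{j=1}^n\sum_{\ell=j+1}^{n}\mathrm I(\mathsf{M}_{(i,j)};X_\ell\mid \mathsf{M}_{(\le i-1,\ell-1)},\mathsf{M}_{(\le i-1,j)})$. With $\mathsf{M}_i=\mathsf{M}_{(i,n)}$ for $i\ge1$ and $\mathsf{M}_{<k}=(\mathsf{M}_0,\dots,\mathsf{M}_{k-1})$,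 $MIC_{cond}(\mathsf{M},\mu)=\sum_{j=1}^n\sum_{\ell=1}^j\mathrm I(\mathsf{M}_{(\le k,j)};X_\ell\mid\mathsf{M}_{<k},\mathsf{M}_{(\le k,\ell-1)})$. *)

(* Defs.v *)
From HB Require Import structures.
From mathcomp Require Import all_boot all_order all_algebra.
From mathcomp Require Import all_classical all_reals all_analysis.
Set Implicit Arguments. Unset Strict Implicit. Unset Printing Implicit Defensive.
Import Order.TTheory GRing.Theory Num.Theory.
Local Open Scope ring_scope.

Section Info.
Variable R : realType.

Definition log2 (x : R) : R := ln x / ln 2.

Variable Omega : finType.
Variable P : Omega -> R.

Definition prob (E : pred Omega) : R := \sum_(w | E w) P w.

(* Conditional mutual information I(U ; V | W) of random variables
   U, V, W defined on the finite probability space (Omega, P):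
     E_w [ log2 ( p(u,v,w) p(w) / (p(u,w) p(v,w)) ) ]
   evaluated at (u,v,w) = (U w, V w, W w).                            *)
Definition cmi (TU TV TW : eqType) (U : Omega -> TU) (V : Omega -> TV)
    (W : Omega -> TW) : R :=
  \sum_(w : Omega) P w * log2
    (prob [pred w' | [&& U w' == U w, V w' == V w & W w' == W w]]
       * prob [pred w' | W w' == W w]
     / (prob [pred w' | (U w' == U w) && (W w' == W w)]
          * prob [pred w' | (V w' == V w) && (W w' == W w)])).
End Info.

(* The outcome space records the stream x = (X_1..X_n)
   (X_l is x (l-1)) and the whole memory trajectory: traj (i-1, j-1) is the
   memory state M_(i,j) in pass i after reading j elements (1 <= i <= k,
   1 <= j <= n).                                                      *)
Definition outcome (A S : finType) (k n : nat) :=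
  ({ffun 'I_n -> A} * {ffun 'I_k * 'I_n -> S})%type.

Section Stream.
Variables (A S : finType) (k n : nat) (m0 : S).

(* value of the trajectory at 0-based indices (i, j), m0 if out of range *)
Definition traj_at (f : {ffun 'I_k * 'I_n -> S}) (i j : nat) : S :=
  match insub i, insub j with
  | Some a, Some b => f (a, b)
  | _, _ => m0
  end.

(* mem w i j = M_(i,j), for 1 <= i <= k and 0 <= j <= n, with the
   conventions M_(1,0) = M_0 = m0 and M_(i+1,0) = M_(i,n).             *)
Definition mem (w : outcome A S k n) (i j : nat) : S :=
  if j == 0%N then (if (i <= 1)%N then m0 else traj_at w.2 (i - 2) (n - 1))
  else traj_at w.2 (i - 1) (j - 1).

Definition memEnd (w : outcome A S k n) (i : nat) : S :=
  if i == 0%N then m0 else mem w i n.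

Definition memUpTo (w : outcome A S k n) (i j : nat) : seq S :=
  [seq mem w i' j | i' <- iota 1 i].

Definition memBefore (w : outcome A S k n) : seq S :=
  [seq memEnd w i | i <- iota 0 k].

Variable R : realType.

(* mu l : law of X_(l+1); the stream law is the product of the mu l.
   T i j m x m' : probability that, in pass i+1, the algorithm moves from
   memory state m = M_(i+1,j) to m' = M_(i+1,j+1) upon reading x = X_(j+1)
   (fresh independent private randomness at every step).              *)
Definition joint (mu : 'I_n -> A -> R) (T : 'I_k -> 'I_n -> S -> A -> S -> R)
    (w : outcome A S k n) : R :=
  (\prod_(l < n) mu l (w.1 l)) *
  \prod_(p : 'I_k * 'I_n)
     T p.1 p.2 (mem w p.1.+1 p.2) (w.1 p.2) (w.2 p).

Definition is_distr (mu : A -> R) : Prop :=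
  (forall a, 0 <= mu a) /\ \sum_a mu a = 1.

Definition is_kernel (T : S -> A -> S -> R) : Prop :=
  forall m x, (forall m', 0 <= T m x m') /\ \sum_m' T m x m' = 1.

Variables (mu : 'I_n -> A -> R) (T : 'I_k -> 'I_n -> S -> A -> S -> R).

Local Notation P := (joint mu T).

Definition Xrv (l : 'I_n) (w : outcome A S k n) : A := w.1 l.

(* MIC(M, mu), with i = i'+1, j = j'+1, l = l'+1 *)
Definition MIC : R :=
  \sum_(i < k) \sum_(j < n) \sum_(l < n | (l <= j)%N)
     cmi P (fun w => mem w i.+1 j.+1) (Xrv l)
       (fun w => (memUpTo w i.+1 l, memUpTo w i j.+1))
  + \sum_(i < k) \sum_(j < n) \sum_(l < n | (j < l)%N)
     cmi P (fun w => mem w i.+1 j.+1) (Xrv l)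
       (fun w => (memUpTo w i l, memUpTo w i j.+1)).

Definition MIC_first : R :=
  \sum_(i < k) \sum_(j < n) \sum_(l < n | (l <= j)%N)
     cmi P (fun w => mem w i.+1 j.+1) (Xrv l)
       (fun w => (memUpTo w i.+1 l, memUpTo w i j.+1)).

Definition MIC_cond : R :=
  \sum_(j < n) \sum_(l < n | (l <= j)%N)
     cmi P (fun w => memUpTo w k j.+1) (Xrv l)
       (fun w => (memBefore w, memUpTo w k l)).
End Stream.

(* Main.v *)
Require Import Defs.
From HB Require Import structures.
From mathcomp Require Import all_boot all_order all_algebra.
From mathcomp Require Import all_classical all_reals all_analysis.
From mathcomp Require Import lra zify.
Import Order.TTheory GRing.Theory Num.Theory.
Local Open Scope ring_scope.

Set Implicit Arguments. Unset Strict Implicit. Unset Printing Implicit Defensive.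

Section InfoLib.
Variable R : realType.
Variable Omega : finType.
Variable P : Omega -> R.
Hypothesis P_ge0 : forall w, 0 <= P w.

Definition pr (TZ : eqType) (Z : Omega -> TZ) (w : Omega) : R :=
  prob P [pred w' | Z w' == Z w].

Definition ent (TZ : eqType) (Z : Omega -> TZ) : R :=
  - \sum_w P w * log2 (pr Z w).

Lemma prob_ge0 (E : pred Omega) : 0 <= prob P E.
Proof. by rewrite /prob; apply: sumr_ge0 => w _; apply: P_ge0. Qed.

Lemma pr_ge (TZ : eqType) (Z : Omega -> TZ) w : P w <= pr Z w.
Proof.
rewrite /pr /prob (bigD1 w) /=; last by rewrite eqxx.
by rewrite lerDl sumr_ge0 // => ? _; apply: P_ge0.
Qed.

Lemma pr_gt0 (TZ : eqType) (Z : Omega -> TZ) w : 0 < P w -> 0 < pr Z w.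
Proof. by move=> h; apply: (lt_le_trans h (pr_ge _ _)). Qed.

Lemma ln2_gt0 : 0 < ln (2 : R).
Proof. by apply: ln_gt0; rewrite ltr1n. Qed.

Lemma log2M (x y : R) : 0 < x -> 0 < y -> log2 (x * y) = log2 x + log2 y.
Proof.
by move=> hx hy; rewrite /log2 lnM ?mulrDl // qualifE /=.
Qed.

Lemma log2V (x : R) : 0 < x -> log2 (x^-1) = - log2 x.
Proof. by move=> hx; rewrite /log2 lnV ?mulNr // qualifE /=. Qed.

Lemma log2_1 : log2 (1 : R) = 0.
Proof. by rewrite /log2 ln1 mul0r. Qed.

Lemma ent_congr (T1 T2 : eqType) (Z1 : Omega -> T1) (Z2 : Omega -> T2) :
  (forall w w', (Z1 w' == Z1 w) = (Z2 w' == Z2 w)) -> ent Z1 = ent Z2.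
Proof.
move=> h; rewrite /ent; congr (- _); apply: eq_bigr => w _.
by congr (_ * log2 _); rewrite /pr /prob; apply: eq_bigl => w' /=; rewrite h.
Qed.

Lemma cmiE (TU TV TW : eqType) (U : Omega -> TU) (V : Omega -> TV) (C : Omega -> TW) :
  cmi P U V C = ent (fun w => (U w, C w)) + ent (fun w => (V w, C w))
               - ent (fun w => (U w, V w, C w)) - ent C.
Proof.
rewrite /ent !opprK -!sumrN -!big_split /=; apply: eq_bigr => w _.
have [Pw0|Pw0] := eqVneq (P w) 0; first by rewrite Pw0 !mul0r !oppr0 !addr0.
have Pw : 0 < P w by rewrite lt_neqAle eq_sym Pw0 P_ge0.
set a := prob _ _; set b := prob _ _; set c := prob _ _; set d := prob _ _.
have pa : 0 < a by apply: (lt_le_trans Pw); rewrite /a /prob (bigD1 w) /= ?eqxx // lerDl sumr_ge0.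
have pb : 0 < b by apply: (lt_le_trans Pw); rewrite /b /prob (bigD1 w) /= ?eqxx // lerDl sumr_ge0.
have pc : 0 < c by apply: (lt_le_trans Pw); rewrite /c /prob (bigD1 w) /= ?eqxx // lerDl sumr_ge0.
have pd : 0 < d by apply: (lt_le_trans Pw); rewrite /d /prob (bigD1 w) /= ?eqxx // lerDl sumr_ge0.
have -> : pr (fun w0 => (U w0, C w0)) w = c.
  by rewrite /pr /c /prob; apply: eq_bigl => w' /=; rewrite xpair_eqE.
have -> : pr (fun w0 => (V w0, C w0)) w = d.
  by rewrite /pr /d /prob; apply: eq_bigl => w' /=; rewrite xpair_eqE.
have -> : pr (fun w0 => (U w0, V w0, C w0)) w = a.
  by rewrite /pr /a /prob; apply: eq_bigl => w' /=; rewrite !xpair_eqE andbA.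
have -> : pr C w = b by [].
rewrite log2M ?mulr_gt0 ?invr_gt0 //; last exact: mulr_gt0. rewrite (log2V (mulr_gt0 pc pd)) log2M // log2M //.
rewrite !mulrDr !mulrN; lra.
Qed.


Lemma ln_ge1V (r : R) : 0 < r -> 1 - r^-1 <= ln r.
Proof.
move=> r0; have h := @le_ln1Dx R (r^-1 - 1).
have e : 1 + (r^-1 - 1) = r^-1 by rewrite addrC subrK.
rewrite e lnV ?qualifE //= in h.
have : -1 < r^-1 - 1 by have := invr_gt0 r; rewrite r0 => /idP; lra.
move/h; lra.
Qed.

Lemma cmi_ge0 (TU TV TW : eqType) (U : Omega -> TU) (V : Omega -> TV) (C : Omega -> TW) :
  0 <= cmi P U V C.
Proof.
pose a w := prob P [pred w' | [&& U w' == U w, V w' == V w & C w' == C w]].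
pose b w := prob P [pred w' | C w' == C w].
pose c w := prob P [pred w' | (U w' == U w) && (C w' == C w)].
pose d w := prob P [pred w' | (V w' == V w) && (C w' == C w)].
have gt0 (E : pred Omega) w : E w -> 0 < P w -> 0 < prob P E.
  move=> Ew Pw; apply: (lt_le_trans Pw); rewrite /prob (bigD1 w) //=.
  by rewrite lerDl sumr_ge0.
have -> : cmi P U V C = (\sum_w P w * ln (a w * b w / (c w * d w))) / ln 2.
  by rewrite /cmi big_distrl /=; apply: eq_bigr => w _; rewrite /log2 mulrA.
apply: divr_ge0; last exact: ltW ln2_gt0.
pose K := \sum_w P w * (c w * d w / (a w * b w)).
have step1 : \sum_w P w - K <= \sum_w P w * ln (a w * b w / (c w * d w)).
  rewrite /K -sumrB; apply: ler_sum => w _.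
  have [Pw0|Pw0] := eqVneq (P w) 0; first by rewrite Pw0 !mul0r subr0.
  have Pw : 0 < P w by rewrite lt_neqAle eq_sym Pw0 P_ge0.
  have pa : 0 < a w by apply: (gt0 _ w) => //=; rewrite !eqxx.
  have pb : 0 < b w by apply: (gt0 _ w) => //=; rewrite !eqxx.
  have pc : 0 < c w by apply: (gt0 _ w) => //=; rewrite !eqxx.
  have pd : 0 < d w by apply: (gt0 _ w) => //=; rewrite !eqxx.
  have r0 : 0 < a w * b w / (c w * d w) by rewrite !(mulr_gt0, invr_gt0).
  have := ln_ge1V r0; rewrite invf_div => h.
  rewrite -[X in X - _]mulr1 -mulrBr; apply: ler_wpM2l => //; exact: P_ge0.
apply: le_trans step1; rewrite subr_ge0.
have cd w : c w * d w = \sum_w1 \sum_w2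
    (if [&& U w1 == U w, C w1 == C w, V w2 == V w & C w2 == C w] then P w1 * P w2 else 0).
  rewrite /c /d /prob big_distrl /= big_mkcond /=. apply eq_bigr => w1 _.
  case: (U w1 == U w); case: (C w1 == C w) => /=; try by rewrite big1_eq.
  rewrite big_distrr /= big_mkcond /=; apply: eq_bigr => w2 _.
  by case: ((V w2 == V w) && (C w2 == C w)); rewrite /= ?mulr0.
have -> : K = \sum_w \sum_w1 \sum_w2
    (if [&& U w1 == U w, C w1 == C w, V w2 == V w & C w2 == C w]
     then P w * (P w1 * P w2) / (a w * b w) else 0).
  rewrite /K; apply: eq_bigr => w _; rewrite cd mulrA big_distrr big_distrl /=.
  apply: eq_bigr => w1 _; rewrite big_distrr big_distrl /=; apply: eq_bigr => w2 _.
  by case: ifP => _; rewrite ?mulr0 ?mul0r // mulrA.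
rewrite exchange_big /=.
have -> : \sum_w1 \sum_w \sum_w2
    (if [&& U w1 == U w, C w1 == C w, V w2 == V w & C w2 == C w]
     then P w * (P w1 * P w2) / (a w * b w) else 0) =
  \sum_w1 \sum_w2 \sum_w
    (if [&& U w1 == U w, C w1 == C w, V w2 == V w & C w2 == C w]
     then P w * (P w1 * P w2) / (a w * b w) else 0).
  by apply: eq_bigr => w1 _; rewrite exchange_big.
apply: (@le_trans _ _ (\sum_w1 \sum_w2 (if C w2 == C w1 then P w1 * P w2 / b w1 else 0))).
  apply: ler_sum => w1 _; apply: ler_sum => w2 _.
  have [e12|ne12] := eqVneq (C w2) (C w1); last first.
    rewrite big1 // => w _; case: ifP => //; case/and4P => _ /eqP h1 _ /eqP h2.
    by move: ne12; rewrite h1 h2 eqxx.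
  pose al := prob P [pred w' | [&& U w' == U w1, V w' == V w2 & C w' == C w1]].
  have -> : \sum_w (if [&& U w1 == U w, C w1 == C w, V w2 == V w & C w2 == C w]
      then P w * (P w1 * P w2) / (a w * b w) else 0) =
    al * (P w1 * P w2 / (al * b w1)).
    rewrite /al /prob big_distrl /= [RHS]big_mkcond /=; apply: eq_bigr => w _.
    case: (eqVneq (U w) (U w1)) => [eu|neu]; last first.
      by [].
    case: (eqVneq (V w) (V w2)) => [ev|nev]; last first.
      by rewrite ?andbF.
    case: (eqVneq (C w) (C w1)) => [ec|nec]; last first.
      by rewrite ?andbF.
    rewrite /=.
    have -> : a w = al.
      by rewrite /a /al /prob; apply: eq_bigl => w' /=; rewrite eu ev ec.
    have -> : b w = b w1.
      by rewrite /b /prob; apply: eq_bigl => w' /=; rewrite ec.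
    by rewrite e12 ec eqxx -mulrA.
  have [al0|al0] := eqVneq al 0; first by rewrite al0 mul0r divr_ge0 ?mulr_ge0 ?P_ge0 ?prob_ge0 // /b prob_ge0.
  by rewrite invfM mulrCA (mulrA al) mulfV // mul1r.
apply: ler_sum => w1 _.
rewrite -big_mkcond /= (eq_bigr (fun w2 => P w1 / b w1 * P w2)); last first.
  by move=> w2 _; rewrite mulrAC.
rewrite -big_distrr /=.
have -> : \sum_(w2 | C w2 == C w1) P w2 = b w1 by [].
have [b0|b0] := eqVneq (b w1) 0.
  by rewrite b0 invr0 !mulr0 P_ge0.
by rewrite divfK.
Qed.


Ltac pcongr := move=> ? ?; rewrite /= ?xpair_eqE ?eqxx ?andbT; do ![case: (_ == _)] => //.

Lemma cmi_congr (TU TV TW TU' TV' TW' : eqType) (U : Omega -> TU) (V : Omega -> TV)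
  (C : Omega -> TW) (U' : Omega -> TU') (V' : Omega -> TV') (C' : Omega -> TW') :
  (forall w w', (U w' == U w) = (U' w' == U' w)) ->
  (forall w w', (V w' == V w) = (V' w' == V' w)) ->
  (forall w w', (C w' == C w) = (C' w' == C' w)) ->
  cmi P U V C = cmi P U' V' C'.
Proof.
move=> hU hV hC; rewrite !cmiE.
rewrite (ent_congr (Z1 := fun w => (U w, C w)) (Z2 := fun w => (U' w, C' w)));
  last by move=> w w'; rewrite !xpair_eqE hU hC.
rewrite (ent_congr (Z1 := fun w => (V w, C w)) (Z2 := fun w => (V' w, C' w)));
  last by move=> w w'; rewrite !xpair_eqE hV hC.
rewrite (ent_congr (Z1 := fun w => (U w, V w, C w)) (Z2 := fun w => (U' w, V' w, C' w)));
  last by move=> w w'; rewrite !xpair_eqE hU hV hC.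
by rewrite (ent_congr (Z1 := C) (Z2 := C')).
Qed.

Lemma cmi_sym (TU TV TW : eqType) (U : Omega -> TU) (V : Omega -> TV) (C : Omega -> TW) :
  cmi P U V C = cmi P V U C.
Proof.
rewrite !cmiE.
rewrite (ent_congr (Z1 := fun w => (U w, V w, C w)) (Z2 := fun w => (V w, U w, C w)));
  last by pcongr.
lra.
Qed.

Lemma cmi_chain (T1 T2 TV TW : eqType) (U1 : Omega -> T1) (U2 : Omega -> T2)
  (V : Omega -> TV) (C : Omega -> TW) :
  cmi P (fun w => (U1 w, U2 w)) V C = cmi P U1 V C + cmi P U2 V (fun w => (C w, U1 w)).
Proof.
rewrite !cmiE.
rewrite (ent_congr (Z1 := fun w => (U2 w, (C w, U1 w))) (Z2 := fun w => ((U1 w, U2 w), C w)));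
  last by pcongr.
rewrite (ent_congr (Z1 := fun w => (V w, (C w, U1 w))) (Z2 := fun w => (U1 w, V w, C w)));
  last by pcongr.
rewrite (ent_congr (Z1 := fun w => (U2 w, V w, (C w, U1 w))) (Z2 := fun w => ((U1 w, U2 w), V w, C w)));
  last by pcongr.
rewrite (ent_congr (Z1 := fun w => (C w, U1 w)) (Z2 := fun w => (U1 w, C w)));
  last by pcongr.
lra.
Qed.

Lemma cmi_chain2 (TU T1 T2 TW : eqType) (U : Omega -> TU) (V1 : Omega -> T1)
  (V2 : Omega -> T2) (C : Omega -> TW) :
  cmi P U (fun w => (V1 w, V2 w)) C = cmi P U V1 C + cmi P U V2 (fun w => (C w, V1 w)).
Proof. by rewrite cmi_sym cmi_chain cmi_sym (cmi_sym V2). Qed.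

Lemma cmi_constU (TU TV TW : eqType) (U : Omega -> TU) (V : Omega -> TV) (C : Omega -> TW) :
  (forall w w', U w = U w') -> cmi P U V C = 0.
Proof.
move=> hU; rewrite cmiE.
rewrite (ent_congr (Z1 := fun w => (U w, C w)) (Z2 := C));
  last by move=> w w'; rewrite xpair_eqE (hU w' w) eqxx.
rewrite (ent_congr (Z1 := fun w => (U w, V w, C w)) (Z2 := fun w => (V w, C w)));
  last by move=> w w'; rewrite !xpair_eqE (hU w' w) eqxx.
lra.
Qed.

Lemma cmi_addcond (TA TX TB TD : eqType) (A : Omega -> TA) (X : Omega -> TX)
  (B : Omega -> TB) (D : Omega -> TD) :
  cmi P D X B = 0 -> cmi P A X B <= cmi P A X (fun w => (B w, D w)).
Proof.
move=> h0.
have e1 := cmi_chain D A X B.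
have e2 := cmi_chain A D X B.
have e3 : cmi P (fun w => (D w, A w)) X B = cmi P (fun w => (A w, D w)) X B
  by apply: cmi_congr => //; pcongr.
have := cmi_ge0 D X (fun w => (B w, A w)).
lra.
Qed.

Lemma cmi_monoV (TU T1 T2 TW : eqType) (U : Omega -> TU) (V1 : Omega -> T1)
  (V2 : Omega -> T2) (C : Omega -> TW) :
  cmi P U V1 C <= cmi P U (fun w => (V1 w, V2 w)) C.
Proof. rewrite cmi_chain2; have := cmi_ge0 U V2 (fun w => (C w, V1 w)); lra. Qed.

Lemma cmi_dropcond (TY TX TC TE : eqType) (Y : Omega -> TY) (X : Omega -> TX)
  (C : Omega -> TC) (E : Omega -> TE) :
  cmi P E X (fun w => (C w, Y w)) = 0 -> cmi P E X C = 0 ->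
  cmi P Y X (fun w => (C w, E w)) = cmi P Y X C.
Proof.
move=> h1 h2.
have e1 := cmi_chain Y E X C.
have e2 := cmi_chain E Y X C.
have e3 : cmi P (fun w => (E w, Y w)) X C = cmi P (fun w => (Y w, E w)) X C
  by apply: cmi_congr => //; pcongr.
lra.
Qed.

Lemma cmi_mix0 (TU TV TW : eqType) (U : Omega -> TU) (V : Omega -> TV) (C : Omega -> TW)
  (mix : Omega -> Omega -> Omega) :
  (forall w1 w2, C w1 = C w2 -> [/\ C (mix w1 w2) = C w1, U (mix w1 w2) = U w2,
      V (mix w1 w2) = V w1, mix (mix w1 w2) (mix w2 w1) = w1
    & P (mix w1 w2) * P (mix w2 w1) = P w1 * P w2]) ->
  cmi P U V C = 0.
Proof.
move=> hm; rewrite /cmi big1 // => w _.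
have [Pw0|Pw0] := eqVneq (P w) 0; first by rewrite Pw0 mul0r.
have Pw : 0 < P w by rewrite lt_neqAle eq_sym Pw0 P_ge0.
have gt0 (E : pred Omega) : E w -> 0 < prob P E.
  move=> Ew; apply: (lt_le_trans Pw); rewrite /prob (bigD1 w) //=.
  by rewrite lerDl sumr_ge0.
set a := prob _ _; set b := prob _ _; set c := prob _ _; set d := prob _ _.
have pc : 0 < c by apply: gt0 => /=; rewrite !eqxx.
have pd : 0 < d by apply: gt0 => /=; rewrite !eqxx.
suff -> : a * b = c * d by rewrite divff ?log2_1 ?mulr0 // mulf_neq0 // gt_eqF.
pose phi (x : Omega * Omega) :=
  if C x.1 == C x.2 then (mix x.2 x.1, mix x.1 x.2) else x.
have phiK : cancel phi phi.
  move=> [x1 x2]; rewrite /phi /=.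
  have [e|ne] := eqVneq (C x1) (C x2); last by rewrite (negbTE ne).
  have [hc21 _ _ _ _] := hm x2 x1 (esym e).
  have [hc12 _ _ hmm1 _] := hm x1 x2 e.
  have [_ _ _ hmm2 _] := hm x2 x1 (esym e).
  by rewrite hc21 hc12 e eqxx hmm2 hmm1.
have ab : a * b = \sum_x1 \sum_x2
   (if [&& U x1 == U w, V x1 == V w, C x1 == C w & C x2 == C w]
    then P x1 * P x2 else 0).
  rewrite /a /b /prob big_distrl /= [LHS]big_mkcond /=.
  apply: eq_bigr => x1 _.
  case: (U x1 == U w); case: (V x1 == V w); case: (C x1 == C w);
    rewrite /= ?big1_eq //.
  by rewrite big_distrr [LHS]big_mkcond /=; apply: eq_bigr => x2 _; case: ifP; rewrite ?mulr0.
have cd : c * d = \sum_x1 \sum_x2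
   (if [&& U x1 == U w, C x1 == C w, V x2 == V w & C x2 == C w]
    then P x1 * P x2 else 0).
  rewrite /c /d /prob big_distrl /= [LHS]big_mkcond /=.
  apply: eq_bigr => x1 _.
  case: (U x1 == U w); case: (C x1 == C w); rewrite /= ?big1_eq //.
  by rewrite big_distrr [LHS]big_mkcond /=; apply: eq_bigr => x2 _; case: ifP; rewrite ?mulr0.
rewrite ab cd !pair_bigA (reindex_inj (can_inj phiK)) /=; apply: eq_bigr => [[x1 x2]] _ /=.
rewrite /phi /=.
have [e|ne] := eqVneq (C x1) (C x2); last first.
  case: (eqVneq (C x1) (C w)) => [h1|h1]; last by rewrite /= ?andbF.
  have h2 : (C x2 == C w) = false by rewrite -h1 eq_sym (negbTE ne).
  by rewrite h2 /= ?andbF.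
rewrite /=.
have [hc21 hu21 hv21 _ hp21] := hm x2 x1 (esym e).
have [hc12 _ _ _ _] := hm x1 x2 e.
rewrite hc21 hu21 hv21 hc12 hp21 e mulrC.
by case: (U x1 == U w); case: (V x2 == V w); case: (C x2 == C w).
Qed.


Lemma prob_sub (E1 E2 : pred Omega) : (forall w, E1 w -> E2 w) -> prob P E1 <= prob P E2.
Proof.
move=> h; rewrite /prob [X in X <= _]big_mkcond [X in _ <= X]big_mkcond /=.
apply: ler_sum => w _; case: ifP => e1; first by rewrite h.
by case: ifP => // _; apply: P_ge0.
Qed.

Lemma log2_le (x y : R) : 0 < x -> x <= y -> log2 x <= log2 y.
Proof.
move=> x0 xy; have y0 : 0 < y by apply: lt_le_trans xy.
rewrite /log2 ler_pM2r ?invr_gt0 ?ln2_gt0 //.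
by rewrite ler_ln // qualifE /=.
Qed.

Lemma ent_mono (T1 T2 : eqType) (f : Omega -> T1) (g : Omega -> T2) :
  (forall w w', f w' == f w -> g w' == g w) -> ent g <= ent f.
Proof.
move=> h; rewrite /ent lerN2; apply: ler_sum => w _.
have [Pw0|Pw0] := eqVneq (P w) 0; first by rewrite Pw0 !mul0r.
have Pw : 0 < P w by rewrite lt_neqAle eq_sym Pw0 P_ge0.
apply: ler_wpM2l; first exact: P_ge0.
apply: log2_le; first exact: pr_gt0.
by apply: prob_sub => w' /=; apply: h.
Qed.

Lemma ent_const (T : eqType) (t : T) : \sum_w P w = 1 -> ent (fun _ => t) = 0.
Proof.
move=> h1; rewrite /ent.
rewrite big1 ?oppr0 // => w _.
have -> : pr (fun _ => t) w = 1.
  by rewrite /pr /prob -h1; apply: eq_bigl => w' /=; rewrite eqxx.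
by rewrite log2_1 mulr0.
Qed.

Lemma log2_le_sub1 (y : R) : 0 < y -> log2 y <= (y - 1) / ln 2.
Proof.
move=> y0; rewrite /log2 ler_pM2r ?invr_gt0 ?ln2_gt0 //.
have h := @le_ln1Dx R (y - 1).
have e : 1 + (y - 1) = y by rewrite addrC subrK.
rewrite e in h; apply: h; lra.
Qed.

Lemma ent_bound (F : finType) (Z : Omega -> F) :
  \sum_w P w = 1 -> ent Z <= log2 #|F|%:R.
Proof.
move=> h1.
have N0 : (0 < #|F|)%N.
  case: (pickP (fun _ : Omega => true)) => [w _|h0].
    by apply/card_gt0P; exists (Z w).
  by move: h1; rewrite big_pred0 // => /eqP; rewrite eq_sym oner_eq0.
set N := #|F|%:R.
have Npos : 0 < N by rewrite ltr0n.
have key : \sum_w P w / pr Z w <= N.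
  rewrite (partition_big Z xpredT) //= /N -sum1_card /= natr_sum.
  apply: ler_sum => v _.
  pose pv := \sum_(w | Z w == v) P w.
  rewrite (eq_bigr (fun w => P w / pv)); last first.
    move=> w /= /eqP ev; congr (_ / _).
    by rewrite /pr /prob /pv; apply: eq_bigl => w' /=; rewrite ev.
  rewrite -big_distrl /=.
  have -> : \sum_(i | true && (Z i == v)) P i = pv by [].
  have [p0|p0] := eqVneq pv 0; first by rewrite p0 mul0r.
  by rewrite mulfV.
have step : ent Z - log2 N <= \sum_w P w * ((N^-1 / pr Z w - 1) / ln 2).
  rewrite /ent (_ : log2 N = \sum_w P w * log2 N); last by rewrite -big_distrl /= h1 mul1r.
  rewrite -sumrN -sumrB; apply: ler_sum => w _.
  have [Pw0|Pw0] := eqVneq (P w) 0; first by rewrite Pw0 !mul0r; lra.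
  have Pw : 0 < P w by rewrite lt_neqAle eq_sym Pw0 P_ge0.
  have pp := pr_gt0 Z Pw.
  have yp : 0 < N^-1 / pr Z w by rewrite mulr_gt0 ?invr_gt0.
  have := log2_le_sub1 yp; rewrite log2M ?invr_gt0 // !log2V //.
  move=> h; rewrite -mulrN -mulrBr; apply: ler_wpM2l; first exact: P_ge0.
  lra.
have : \sum_w P w * ((N^-1 / pr Z w - 1) / ln 2) <= 0.
  have -> : \sum_w P w * ((N^-1 / pr Z w - 1) / ln 2) =
      (N^-1 * (\sum_w P w / pr Z w) - \sum_w P w) / ln 2.
    rewrite big_distrr /= -sumrB big_distrl /=; apply: eq_bigr => w _.
    by rewrite mulrA mulrBr mulr1 mulrCA mulrA.
  rewrite h1 pmulr_lle0 ?invr_gt0 ?ln2_gt0 // subr_le0.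
  by rewrite ler_pdivrMl // mulr1.
lra.
Qed.

Lemma cmi_le_ent (TU TV TW : eqType) (U : Omega -> TU) (V : Omega -> TV) (C : Omega -> TW) :
  \sum_w P w = 1 -> cmi P U V C <= ent U.
Proof.
move=> h1; rewrite cmiE.
have m1 : ent (fun w => (V w, C w)) <= ent (fun w => (U w, V w, C w)).
  by apply: ent_mono => w w'; rewrite !xpair_eqE => /andP [/andP [_ ->] ->].
have g := cmi_ge0 U C (fun _ => tt).
rewrite cmiE ent_const // in g.
rewrite (ent_congr (Z1 := fun w => (U w, tt)) (Z2 := U)) in g; last by pcongr.
rewrite (ent_congr (Z1 := fun w => (C w, tt)) (Z2 := C)) in g; last by pcongr.
rewrite (ent_congr (Z1 := fun w => (U w, C w, tt)) (Z2 := fun w => (U w, C w))) in g;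
  last by pcongr.
lra.
Qed.

End InfoLib.

Lemma prob_sumE (R : realType) (Omega : finType) (P : Omega -> R) (E : pred Omega) :
  prob P E = \sum_w P w * (if E w then 1 else 0).
Proof.
by rewrite /prob big_mkcond /=; apply: eq_bigr => w _; case: ifP; rewrite ?mulr1 ?mulr0.
Qed.

Lemma cmi_transfer (R : realType) (Omega : finType) (P Q : Omega -> R) (c : R)
  (TU TV TW : eqType) (U : Omega -> TU) (V : Omega -> TV) (C : Omega -> TW) :
  0 < c ->
  (forall g : Omega -> R,
     (forall w w', U w = U w' -> V w = V w' -> C w = C w' -> g w = g w') ->
     \sum_w P w * g w = c * \sum_w Q w * g w) ->
  cmi P U V C = c * cmi Q U V C.
Proof.
move=> c0 h.
have hp (E : Omega -> pred Omega) w0 :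
  (forall w w', U w = U w' -> V w = V w' -> C w = C w' -> E w0 w = E w0 w') ->
  prob P (E w0) = c * prob Q (E w0).
  move=> hE; rewrite !prob_sumE; apply: h => w w' e1 e2 e3.
  by rewrite (hE w w').
pose rat (Q' : Omega -> R) w :=
  prob Q' [pred w' | [&& U w' == U w, V w' == V w & C w' == C w]] *
     prob Q' [pred w' | C w' == C w] /
  (prob Q' [pred w' | (U w' == U w) && (C w' == C w)] *
     prob Q' [pred w' | (V w' == V w) && (C w' == C w)]).
have -> : cmi P U V C = \sum_w P w * log2 (rat P w) by [].
have -> : cmi Q U V C = \sum_w Q w * log2 (rat Q w) by [].
rewrite (eq_bigr (fun w => P w * log2 (rat Q w))); last first.
  move=> w _; congr (_ * log2 _); rewrite /rat.
  rewrite (hp (fun w0 => [pred w' | [&& U w' == U w0, V w' == V w0 & C w' == C w0]]) w);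
    last by move=> x x' /= -> -> ->.
  rewrite (hp (fun w0 => [pred w' | C w' == C w0]) w); last by move=> x x' /= _ _ ->.
  rewrite (hp (fun w0 => [pred w' | (U w' == U w0) && (C w' == C w0)]) w);
    last by move=> x x' /= -> _ ->.
  rewrite (hp (fun w0 => [pred w' | (V w' == V w0) && (C w' == C w0)]) w);
    last by move=> x x' /= _ -> ->.
  have cn : c != 0 by rewrite gt_eqF.
  move: (prob Q _) (prob Q _) (prob Q _) (prob Q _) => x1 x2 x3 x4.
  rewrite mulrACA [c * x2 * _]mulrACA invfM (mulrACA (c * c)) divff ?mul1r //.
  by rewrite mulf_neq0.
apply: h => w w' e1 e2 e3; by rewrite /rat e1 e2 e3.
Qed.

Set Implicit Arguments. Unset Strict Implicit. Unset Printing Implicit Defensive.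

Section Conc.
Variables (R : realType) (A S : finType) (k n : nat) (m0 : S).
Variables (mu : 'I_n -> A -> R) (T : 'I_k -> 'I_n -> S -> A -> S -> R).
Hypothesis hmu : forall l, is_distr (mu l).
Hypothesis hT : forall i j, is_kernel (T i j).

Local Notation Om := (outcome A S k n).
Local Notation memw := (@Defs.mem A S k n m0).
Local Notation P := (joint m0 mu T).

Definition rk (p : 'I_k * 'I_n) : nat := (p.1 * n + p.2)%N.

Definition dep (TZ : Type) (m : nat) (f : Om -> TZ) :=
  forall w w' : Om, w.1 = w'.1 -> (forall p, (rk p < m)%N -> w.2 p = w'.2 p) -> f w = f w'.

Lemma dep_mono (TZ : Type) m m' (f : Om -> TZ) : (m <= m')%N -> dep m f -> dep m' f.
Proof.
move=> h d w w' e1 e2; apply: d => // p hp; apply: e2; exact: leq_trans hp h.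
Qed.

Lemma dep_pair (T1 T2 : Type) m (f : Om -> T1) (g : Om -> T2) :
  dep m f -> dep m g -> dep m (fun w => (f w, g w)).
Proof. by move=> df dg w w' e1 e2; rewrite (df w w') // (dg w w'). Qed.

Lemma dep_map (T1 : Type) (I : eqType) m (s : seq I) (f : I -> Om -> T1) :
  (forall i, i \in s -> dep m (f i)) -> dep m (fun w => [seq f i w | i <- s]).
Proof.
elim: s => [|x s IH] h w w' e1 e2 //=.
rewrite (h x (mem_head _ _) w w') //; congr (_ :: _).
by apply: IH => // i hi; apply: h; rewrite in_cons hi orbT.
Qed.

Lemma traj_at_ext (f f' : {ffun 'I_k * 'I_n -> S}) a b :
  (forall (x : 'I_k) (y : 'I_n), val x = a -> val y = b -> f (x, y) = f' (x, y)) ->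
  traj_at m0 f a b = traj_at m0 f' a b.
Proof.
move=> h; rewrite /traj_at; case: insubP => [x _ ex|_] //.
by case: insubP => [y _ ey|_] //; apply: h.
Qed.

Lemma traj_atE (f : {ffun 'I_k * 'I_n -> S}) (x : 'I_k) (y : 'I_n) :
  traj_at m0 f x y = f (x, y).
Proof.
rewrite /traj_at; case: insubP => [x' _ ex|]; last by rewrite ltn_ord.
case: insubP => [y' _ ey|]; last by rewrite ltn_ord.
by congr (f (_, _)); apply: val_inj.
Qed.

Lemma dep_mem a q m : ((a - 1) * n + q <= m)%N -> dep m (fun w => memw w a q).
Proof.
move=> h w w' e1 e2; rewrite /Defs.mem; case: ifP => q0.
  case: ifP => a1 //; apply: traj_at_ext => x y ex ey; apply: e2.
  rewrite /rk /= ex ey; move/eqP: q0 => q0; subst q.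
  have y0 := ltn_ord y; nia.
apply: traj_at_ext => x y ex ey; apply: e2.
rewrite /rk /= ex ey; move: q0 => /negbT q0; nia.
Qed.

Lemma mem_last (w : Om) (a : 'I_k) (b : 'I_n) : memw w a.+1 b.+1 = w.2 (a, b).
Proof. by rewrite /Defs.mem /= !subn1 /= traj_atE. Qed.

Definition Qm (m : nat) (w : Om) : R :=
  (\prod_(l < n) mu l (w.1 l)) *
  \prod_(p : 'I_k * 'I_n | (rk p < m)%N)
     T p.1 p.2 (memw w p.1.+1 p.2) (w.1 p.2) (w.2 p).

Lemma Qm_ge0 m w : 0 <= Qm m w.
Proof.
apply: mulr_ge0; apply: prodr_ge0 => i _; first by case: (hmu i) => h _; apply: h.
by case: (hT i.1 i.2 (memw w i.1.+1 i.2) (w.1 i.2)) => h _; apply: h.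
Qed.

Lemma joint_Qm w : P w = Qm (k * n) w.
Proof.
rewrite /joint /Qm; congr (_ * _); apply: eq_bigl => -[a b] /=.
by rewrite /rk /=; have := ltn_ord a; have := ltn_ord b; nia.
Qed.

Lemma P_ge0 w : 0 <= P w.
Proof. by rewrite joint_Qm Qm_ge0. Qed.

Lemma dep_Qm m : dep m (Qm m).
Proof.
move=> w w' e1 e2; rewrite /Qm e1; congr (_ * _); apply: eq_bigr => p hp.
rewrite (e2 p hp) (dep_mem (m := m) _ e1 e2) //.
by rewrite /rk in hp; rewrite subn1 /=; lia.
Qed.


Lemma rk_inj : injective rk.
Proof.
move=> [a b] [a' b'] /= h.
have n0 : (0 < n)%N by apply: leq_ltn_trans (ltn_ord b).
have e2 : (b : nat) = b'.
  by move: (congr1 (modn^~ n) h); rewrite /rk /= !modnMDl !modn_small.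
have e1 : (a : nat) = a'.
  by move: (congr1 (divn^~ n) h); rewrite /rk /= !divnMDl // !divn_small ?addn0.
by congr (_, _); apply: val_inj.
Qed.

Lemma rk_ex m : (m < k * n)%N -> exists p, rk p = m.
Proof.
move=> h.
have n0 : (0 < n)%N by case: n h => //; rewrite muln0.
have h1 : (m %/ n < k)%N by rewrite ltn_divLR.
have h2 : (m %% n < n)%N by rewrite ltn_pmod.
by exists (Ordinal h1, Ordinal h2); rewrite /rk /= -divn_eq.
Qed.

Lemma Qm_S m p w : rk p = m ->
  Qm m.+1 w = Qm m w * T p.1 p.2 (memw w p.1.+1 p.2) (w.1 p.2) (w.2 p).
Proof.
move=> hp; rewrite /Qm (bigD1 p) /=; last by rewrite hp.
rewrite mulrCA mulrC; congr (_ * _ * _).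
apply: eq_bigl => q; rewrite ltnS leq_eqVlt.
case: (eqVneq q p) => [->|nq]; first by rewrite hp eqxx ltnn.
have : rk q != m by rewrite -hp; apply: contra nq => /eqP /rk_inj ->.
by case: (rk q == m) => //= _; rewrite andbT.
Qed.

Definition upd (p : 'I_k * 'I_n) (w : Om) (s : S) : Om :=
  (w.1, [ffun q => if q == p then s else w.2 q]).

Lemma marg_step m p (g : Om -> R) : rk p = m -> dep m g ->
  \sum_w Qm m.+1 w * g w = (#|S|%:R)^-1 * \sum_w Qm m w * g w.
Proof.
move=> hp dg.
pose H w := Qm m w * g w.
pose F w := T p.1 p.2 (memw w p.1.+1 p.2) (w.1 p.2).
have dH : dep m H by move=> w w' e1 e2; rewrite /H (dep_Qm e1 e2) (dg w w').
have dF : dep m F.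
  move=> w w' e1 e2; rewrite /F e1 (dep_mem (m := m) _ e1 e2) //.
  by rewrite -hp /rk subn1.
have updH w s : H (upd p w s) = H w.
  by apply: dH => // q hq /=; rewrite ffunE; case: eqP => // eq; move: hq; rewrite eq hp ltnn.
have updF w s : F (upd p w s) = F w.
  by apply: dF => // q hq /=; rewrite ffunE; case: eqP => // eq; move: hq; rewrite eq hp ltnn.
have S0 : (0 < #|S|)%N by apply/card_gt0P; exists m0.
have -> : \sum_w Qm m.+1 w * g w = \sum_w H w * F w (w.2 p).
  by apply: eq_bigr => w _; rewrite (Qm_S _ hp) /H /F mulrAC.
apply: (@mulfI _ (#|S|%:R)); first by rewrite pnatr_eq0 -lt0n.
rewrite mulrA mulfV ?mul1r; last by rewrite pnatr_eq0 -lt0n.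
have -> : #|S|%:R * \sum_w H w * F w (w.2 p) = \sum_(s : S) \sum_w H w * F w (w.2 p).
  by rewrite sumr_const mulr_natl.
rewrite exchange_big pair_bigA /=.
pose psi (x : Om * S) := (upd p x.1 x.2, x.1.2 p).
have psiK : cancel psi psi.
  move=> [w s]; rewrite /psi /=; congr (_, _); last by rewrite ffunE eqxx.
  rewrite /upd /=; case: w => w1 w2 /=; congr (_, _); apply/ffunP => q.
  by rewrite !ffunE; case: eqP => // ->.
rewrite (reindex_inj (can_inj psiK)) /=.
rewrite -(pair_bigA _ (fun w s => H (upd p w s) *
     F (upd p w s) ([ffun q => if q == p then s else w.2 q] p))) /=.
apply: eq_bigr => w _.
under eq_bigr do rewrite updH updF ffunE eqxx.
rewrite -big_distrr /=.
by case: (hT p.1 p.2 (memw w p.1.+1 p.2) (w.1 p.2)) => _ ->; rewrite mulr1.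
Qed.

Lemma marg d : forall m (g : Om -> R), (m + d = k * n)%N -> dep m g ->
  \sum_w P w * g w = ((#|S|%:R)^-1) ^+ d * \sum_w Qm m w * g w.
Proof.
elim: d => [|d IH] m g hmd dg.
  rewrite addn0 in hmd; rewrite expr0 mul1r; apply: eq_bigr => w _.
  by rewrite joint_Qm hmd.
have hm : (m < k * n)%N by lia.
have [p hp] := rk_ex hm.
rewrite (IH m.+1 g) ?addSnnS //; last by apply: dep_mono dg.
by rewrite (marg_step hp dg) exprSr mulrA.
Qed.


Definition mix (l j : nat) (w1 w2 : Om) : Om :=
  ([ffun q : 'I_n => if (l <= q <= j)%N then w1.1 q else w2.1 q],
   [ffun p : 'I_k * 'I_n => if (l <= p.2 < j)%N then w1.2 p else w2.2 p]).

Lemma mixK l j w1 w2 : mix l j (mix l j w1 w2) (mix l j w2 w1) = w1.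
Proof.
case: w1 => x1 t1; rewrite /mix /=; congr (_, _); apply/ffunP => q; rewrite !ffunE.
  by case: (l <= q <= j)%N.
by case: (l <= q.2 < j)%N.
Qed.

Lemma mem_mix l j w1 w2 a q : (j < n)%N ->
  memw (mix l j w1 w2) a q = if (l < q <= j)%N then memw w1 a q else memw w2 a q.
Proof.
move=> jn; rewrite /Defs.mem; case: (eqVneq q 0) => [->|q0] /=.
  case: ifP => // _; apply: traj_at_ext => x y _ ey.
  rewrite ffunE /= ey; have -> : (n - 1 < j)%N = false by lia.
  by rewrite andbF.
case: ifP => hc; apply: traj_at_ext => x y _ ey; rewrite ffunE /= ey.
  by have -> : (l <= q - 1 < j)%N = true by lia.
by have -> : (l <= q - 1 < j)%N = false by lia.
Qed.

Definition acond l j m (w1 w2 : Om) := forall a : nat, (a < k)%N ->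
  ((a * n + l < m)%N -> memw w1 a.+1 l = memw w2 a.+1 l) /\
  ((a * n + j < m)%N -> memw w1 a.+1 j.+1 = memw w2 a.+1 j.+1).

Lemma acond_sym l j m w1 w2 : acond l j m w1 w2 -> acond l j m w2 w1.
Proof.
by move=> h a ha; have [h1 h2] := h a ha; split => hh; [rewrite (h1 hh) | rewrite (h2 hh)].
Qed.

Definition fac (w : Om) (p : 'I_k * 'I_n) :=
  T p.1 p.2 (memw w p.1.+1 p.2) (w.1 p.2) (w.2 p).

Lemma fac_mix l j m w1 w2 p : (l <= j)%N -> (j < n)%N -> acond l j m w1 w2 ->
  (rk p < m)%N ->
  fac (mix l j w1 w2) p = if (l <= p.2 <= j)%N then fac w1 p else fac w2 p.
Proof.
move=> lj jn hc; case: p => a q hp; rewrite /fac /= mem_mix // !ffunE /=.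
have [h1 h2] := hc a (ltn_ord a).
rewrite /rk /= in hp.
case: (boolP (l <= q <= j)%N) => hA.
  have -> : (l <= q < j)%N = ((q : nat) != j) by lia.
  have -> : (l < q <= j)%N = ((q : nat) != l) by lia.
  have E1 : (q : nat) = j -> w2.2 (a, q) = w1.2 (a, q).
    move=> qj; rewrite -!mem_last qj; symmetry; apply: h2; by rewrite -qj.
  have E2 : (q : nat) = l -> memw w2 a.+1 q = memw w1 a.+1 q.
    move=> ql; rewrite ql; symmetry; apply: h1; by rewrite -ql.
  by case: (eqVneq (q : nat) j) => [/E1 ->|_]; case: (eqVneq (q : nat) l) => [/E2 ->|_].
have -> : (l <= q < j)%N = false by lia.
by have -> : (l < q <= j)%N = false by lia.
Qed.

Lemma Qm_mix l j m w1 w2 : (l <= j)%N -> (j < n)%N -> acond l j m w1 w2 ->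
  Qm m (mix l j w1 w2) * Qm m (mix l j w2 w1) = Qm m w1 * Qm m w2.
Proof.
move=> lj jn hc; have hc' := acond_sym hc.
rewrite /Qm mulrACA [RHS]mulrACA; congr (_ * _).
  rewrite -!big_split /=; apply: eq_bigr => q _; rewrite !ffunE.
  by case: ifP => _ //; rewrite mulrC.
rewrite -!big_split /=; apply: eq_bigr => p hp.
have e1 := fac_mix lj jn hc hp; have e2 := fac_mix lj jn hc' hp.
rewrite /fac in e1 e2; rewrite e1 e2.
by case: ifP => _ //; rewrite mulrC.
Qed.

Lemma ci_seg l j m (TU TV TW : eqType) (U : Om -> TU) (V : Om -> TV) (C : Om -> TW) :
  (l <= j)%N -> (j < n)%N -> (m <= k * n)%N -> dep m U -> dep m V -> dep m C ->
  (forall w1 w2, U (mix l j w1 w2) = U w2) ->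
  (forall w1 w2, V (mix l j w1 w2) = V w1) ->
  (forall w1 w2, C (mix l j w1 w2) = C w2) ->
  (forall w1 w2, C w1 = C w2 -> acond l j m w1 w2) ->
  cmi P U V C = 0.
Proof.
move=> lj jn hm dU dV dC bU aV bC hac.
have S0 : (0 < #|S|)%N by apply/card_gt0P; exists m0.
rewrite (@cmi_transfer _ _ _ (Qm m) (((#|S|%:R)^-1) ^+ (k * n - m))).
- rewrite (@cmi_mix0 _ _ _ (@Qm_ge0 m) _ _ _ _ _ _ (mix l j)) ?mulr0 //.
  move=> w1 w2 e; split => //; first by rewrite bC e.
    exact: mixK.
  by apply: Qm_mix => //; apply: hac.
- by rewrite exprn_gt0 // invr_gt0 ltr0n.
move=> g hg; apply: marg; first by lia.
move=> w w' e1 e2; apply: hg; [exact: dU | exact: dV | exact: dC].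
Qed.


Local Notation memUp := (@memUpTo A S k n m0).
Local Notation memE := (@memEnd A S k n m0).

Definition Es (i : nat) (w : Om) : seq S := [seq memE w i' | i' <- iota 0 i].

Lemma memUpToS w i q : memUp w i.+1 q = rcons (memUp w i q) (memw w i.+1 q).
Proof.
rewrite /memUpTo.
have -> : iota 1 i.+1 = iota 1 i ++ [:: i.+1] by rewrite -(addn1 i) iotaD add1n addn1.
by rewrite map_cat cats1.
Qed.

Lemma EsS w i : Es i.+1 w = rcons (Es i w) (memE w i).
Proof.
rewrite /Es.
have -> : iota 0 i.+1 = iota 0 i ++ [:: i] by rewrite -(addn1 i) iotaD add0n.
by rewrite map_cat cats1.
Qed.

Lemma memUpTo_eq w1 w2 i q : memUp w1 i q = memUp w2 i q ->
  forall a, (a < i)%N -> memw w1 a.+1 q = memw w2 a.+1 q.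
Proof.
move=> e a ha; have := congr1 (fun s => nth m0 s a) e.
by rewrite /memUpTo !(nth_map 0) ?size_iota // nth_iota // add1n.
Qed.

Lemma Es_eq w1 w2 i : Es i w1 = Es i w2 -> forall a, (a < i)%N -> memE w1 a = memE w2 a.
Proof.
move=> e a ha; have := congr1 (fun s => nth m0 s a) e.
by rewrite /Es !(nth_map 0) ?size_iota // nth_iota // add0n.
Qed.

Lemma dep_memUpTo i q m : (forall i', (1 <= i' <= i)%N -> ((i' - 1) * n + q <= m)%N) ->
  dep m (fun w => memUp w i q).
Proof.
move=> h; apply: dep_map => i'; rewrite mem_iota => hi; apply: dep_mem; apply: h; lia.
Qed.

Lemma dep_memEnd i m : (i * n <= m)%N -> dep m (fun w => memE w i).
Proof.
move=> h w w' e1 e2; rewrite /memEnd; case: ifP => // i0.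
apply: (dep_mem (m := m)) => //; move/negbT: i0 => i0; nia.
Qed.

Lemma dep_Es i m : ((i - 1) * n <= m)%N -> dep m (Es i).
Proof.
move=> h; apply: dep_map => i'; rewrite mem_iota => hi; apply: dep_memEnd; nia.
Qed.

Lemma dep_X m (lo : 'I_n) : dep m (Xrv lo).
Proof. by move=> w w' e1 _; rewrite /Xrv e1. Qed.

Lemma dep_const (TZ : Type) m (z : TZ) : dep m (fun _ => z).
Proof. by []. Qed.

Definition bob (TZ : Type) l j (f : Om -> TZ) := forall w1 w2, f (mix l j w1 w2) = f w2.

Lemma bob_mem l j a q : (j < n)%N -> ~~ (l < q <= j)%N -> bob l j (fun w => memw w a q).
Proof. by move=> jn hq w1 w2; rewrite mem_mix // (negbTE hq). Qed.

Lemma bob_pair (T1 T2 : Type) l j (f : Om -> T1) (g : Om -> T2) :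
  bob l j f -> bob l j g -> bob l j (fun w => (f w, g w)).
Proof. by move=> bf bg w1 w2; rewrite bf bg. Qed.

Lemma bob_map (T1 : Type) (I : eqType) l j (s : seq I) (f : I -> Om -> T1) :
  (forall i, i \in s -> bob l j (f i)) -> bob l j (fun w => [seq f i w | i <- s]).
Proof.
move=> h w1 w2; apply/eq_in_map => i hi; exact: h.
Qed.

Lemma bob_memUpTo l j i q : (j < n)%N -> ~~ (l < q <= j)%N -> bob l j (fun w => memUp w i q).
Proof. by move=> jn hq; apply: bob_map => i' _; apply: bob_mem. Qed.

Lemma bob_memEnd l j i : (j < n)%N -> bob l j (fun w => memE w i).
Proof.
move=> jn w1 w2; rewrite /memEnd; case: ifP => // _; apply: bob_mem => //; lia.
Qed.

Lemma bob_Es l j i : (j < n)%N -> bob l j (Es i).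
Proof. by move=> jn; apply: bob_map => i' _; apply: bob_memEnd. Qed.

Lemma bob_const (TZ : Type) l j (z : TZ) : bob l j (fun _ => z).
Proof. by []. Qed.

Lemma alice_X l j (lo : 'I_n) w1 w2 : (l <= lo <= j)%N -> Xrv lo (mix l j w1 w2) = Xrv lo w1.
Proof. by move=> h; rewrite /Xrv /mix /= ffunE h. Qed.

Lemma memUpTo0 w : (0 < n)%N -> memUp w k 0 = memBefore m0 w.
Proof.
move=> n0; rewrite /memUpTo /memBefore /memEnd.
have -> : iota 1 k = map (addn 1) (iota 0 k) by rewrite -iotaDl.
rewrite -map_comp; apply: eq_map => i /=; rewrite /Defs.mem /=.
case: i => [|i] //=.
have -> : (n == 0%N) = false by lia.
by rewrite !subSS !subn0.
Qed.


Ltac bshuffle := rewrite /= ?xpair_eqE ?eqseq_rcons ?xpair_eqE ?eqxx ?andbT;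
  do ![case: (_ == _)] => //.

Section PartB.
Variables (j l : nat) (lo : 'I_n).
Hypotheses (hlo : nat_of_ord lo = l) (hlj : (l <= j)%N) (hj : (j < n)%N).

Local Notation J := j.+1.
Local Notation X := (Xrv lo).

Definition FF i w := (memUp w i J, Es i w, memUp w i l).
Definition first i := cmi P (fun w => memw w i.+1 J) X (fun w => (memUp w i.+1 l, memUp w i J)).

Lemma aliceX w1 w2 : X (mix l j w1 w2) = X w1.
Proof. by apply: alice_X; rewrite hlo leqnn hlj. Qed.

Lemma claimB i : (i <= k)%N -> cmi P (FF i) X (fun _ => tt) = \sum_(0 <= i' < i) first i'.
Proof.
elim: i => [|i IH] hi.
  rewrite big_nil; apply: cmi_constU; first exact: P_ge0.
  by move=> w w'; reflexivity.
rewrite big_nat_recr //= -IH; last by lia.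
pose B w := (memE w i, memw w i.+1 l).
pose Yn w := memw w i.+1 J.
have e1 : cmi P (FF i.+1) X (fun _ => tt) =
          cmi P (fun w => ((FF i w, B w), Yn w)) X (fun _ => tt).
  apply: (cmi_congr P_ge0) => // w w'; rewrite /FF /B /Yn !memUpToS !EsS; bshuffle.
rewrite e1 (cmi_chain P_ge0) (cmi_chain P_ge0 (FF i) B).
have h0 : cmi P B X (fun w => (tt, FF i w)) = 0.
  apply: (ci_seg (l := l) (j := j) (m := (i * n + l)%N)) => //.
  - by nia.
  - apply: dep_pair; first by apply: dep_memEnd; lia.
    by apply: dep_mem; rewrite subn1 /=.
  - exact: dep_X.
  - apply: dep_pair => //; apply: dep_pair; first apply: dep_pair.
    + by apply: dep_memUpTo => i' hi'; nia.
    + by apply: dep_Es; nia.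
    + by apply: dep_memUpTo => i' hi'; nia.
  - apply: bob_pair; first exact: bob_memEnd.
    by apply: bob_mem => //; rewrite ltnn.
  - exact: aliceX.
  - apply: bob_pair => //; apply: bob_pair; first apply: bob_pair.
    + by apply: bob_memUpTo => //; lia.
    + exact: bob_Es.
    + by apply: bob_memUpTo => //; rewrite ltnn.
  - move=> w1 w2 [eY eE eW] a ha; split => h.
      by apply: (memUpTo_eq eW); nia.
    by apply: (memUpTo_eq eY); nia.
have h1 : cmi P Yn X (fun w => (tt, (FF i w, B w))) = first i.
  rewrite /first.
  rewrite (@cmi_congr _ _ _ P_ge0 _ _ _ _ _ _ Yn X _ Yn X
     (fun w => ((memUp w i.+1 l, memUp w i J), Es i.+1 w))) //; last first.
    move=> w w'; rewrite /FF /B !memUpToS !EsS; bshuffle.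
  apply: (cmi_dropcond P_ge0) => //.
  - apply: (ci_seg (l := l) (j := j) (m := (i * n + J)%N)) => //.
    + by nia.
    + by apply: dep_Es; nia.
    + exact: dep_X.
    + apply: dep_pair; first apply: dep_pair.
      * by apply: dep_memUpTo => i' hi'; nia.
      * by apply: dep_memUpTo => i' hi'; nia.
      * by apply: dep_mem; rewrite subn1 /=.
    + exact: bob_Es.
    + exact: aliceX.
    + apply: bob_pair; first apply: bob_pair.
      * by apply: bob_memUpTo => //; rewrite ltnn.
      * by apply: bob_memUpTo => //; lia.
      * by apply: bob_mem => //; lia.
    + move=> w1 w2 e a ha.
      move: (congr1 fst (congr1 fst e)) (congr1 snd (congr1 fst e)) (congr1 snd e).
      move=> /= eW eY eYn; split => h.
        by apply: (memUpTo_eq eW); nia.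
      have [ai|ai] : (a < i)%N \/ a = i by nia.
        by apply: (memUpTo_eq eY).
      by rewrite ai; exact: eYn.
  - apply: (ci_seg (l := l) (j := j) (m := (i * n + l)%N)) => //.
    + by nia.
    + by apply: dep_Es; nia.
    + exact: dep_X.
    + apply: dep_pair.
      * by apply: dep_memUpTo => i' hi'; nia.
      * by apply: dep_memUpTo => i' hi'; nia.
    + exact: bob_Es.
    + exact: aliceX.
    + apply: bob_pair.
      * by apply: bob_memUpTo => //; rewrite ltnn.
      * by apply: bob_memUpTo => //; lia.
    + move=> w1 w2 e a ha.
      move: (congr1 fst e) (congr1 snd e) => /= eW eY; split => h.
        by apply: (memUpTo_eq eW); nia.
      by apply: (memUpTo_eq eY); nia.
by rewrite h0 h1 addr0.
Qed.

Lemma partB :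
  cmi P (fun w => memUp w k J) X (fun w => (memBefore m0 w, memUp w k l)) <=
  \sum_(i < k) first i.
Proof.
rewrite -(big_mkord xpredT first) -claimB //.
have e1 : cmi P (FF k) X (fun _ => tt) =
   cmi P (fun w => ((memBefore m0 w, memUp w k l), memUp w k J)) X (fun _ => tt).
  by apply: (cmi_congr P_ge0) => // w w'; rewrite /FF /memBefore; bshuffle.
have e2 : cmi P (fun w => memUp w k J) X (fun w => (tt, (memBefore m0 w, memUp w k l))) =
   cmi P (fun w => memUp w k J) X (fun w => (memBefore m0 w, memUp w k l)).
  by apply: (cmi_congr P_ge0) => // w w'; bshuffle.
rewrite e1 (cmi_chain P_ge0) e2.
have := cmi_ge0 P_ge0 (fun w => (memBefore m0 w, memUp w k l)) X (fun _ => tt).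
lra.
Qed.

End PartB.


Lemma mass1 : \sum_w P w = 1.
Proof.
have S0 : (0 < #|S|)%N by apply/card_gt0P; exists m0.
have := @marg (k * n) 0 (fun _ => 1) (add0n _) (fun w w' _ _ => erefl).
under eq_bigr do rewrite mulr1.
move=> ->; under eq_bigr do rewrite mulr1.
have -> : \sum_w Qm 0 w = \sum_(w : Om) (\prod_(l < n) mu l (w.1 l)).
  by apply: eq_bigr => w _; rewrite /Qm [X in _ * X]big_pred0 ?mulr1 // => p; rewrite ltn0.
rewrite -(pair_bigA _ (fun (x : {ffun 'I_n -> A}) (t : {ffun 'I_k * 'I_n -> S}) => \prod_(l < n) mu l (x l))) /=.
have -> : \sum_(x : {ffun 'I_n -> A}) \sum_(t : {ffun 'I_k * 'I_n -> S}) \prod_(l < n) mu l (x l)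
    = \sum_(x : {ffun 'I_n -> A}) (#|S| ^ (k * n))%:R * \prod_(l < n) mu l (x l).
  apply: eq_bigr => x _; rewrite sumr_const mulr_natl card_ffun card_prod !card_ord.
  by [].
rewrite -big_distrr /= -(bigA_distr_bigA (fun l a => mu l a)) /=.
rewrite big1; last by move=> l _; case: (hmu l).
rewrite mulr1 natrX -exprMn mulVf ?expr1n //.
by rewrite pnatr_eq0 -lt0n.
Qed.

Section PartC.
Variables (j : nat).
Hypothesis hj : (j < n)%N.
Local Notation J := j.+1.

Definition Gam (L : nat) (w : Om) :=
  ([ffun q : 'I_n => if (q < L)%N then Some (w.1 q) else None],
   [seq memUp w k q | q <- iota 1 L]).
Definition Gl (lo : 'I_n) (w : Om) := (Xrv lo w, memUp w k lo.+1).
Local Notation Yk := (fun w => memUp w k J).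
Local Notation E := (fun w => memBefore m0 w).

Lemma iota1S L : iota 1 L.+1 = rcons (iota 1 L) L.+1.
Proof. by rewrite -cats1 -(addn1 L) iotaD add1n addn1. Qed.

Lemma GamS L (lo : 'I_n) (w w' : Om) : nat_of_ord lo = L ->
  (Gam L.+1 w' == Gam L.+1 w) =
  ((Gam L w' == Gam L w) && (Gl lo w' == Gl lo w)).
Proof.
move=> hL; rewrite /Gam /Gl /Xrv !xpair_eqE iota1S !map_rcons eqseq_rcons.
have -> : ([ffun q : 'I_n => if (q < L.+1)%N then Some (w'.1 q) else None] ==
           [ffun q : 'I_n => if (q < L.+1)%N then Some (w.1 q) else None]) =
          ([ffun q : 'I_n => if (q < L)%N then Some (w'.1 q) else None] ==
           [ffun q : 'I_n => if (q < L)%N then Some (w.1 q) else None]) &&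
          (w'.1 lo == w.1 lo).
  apply/eqP/andP => [e|[/eqP e1 /eqP e2]].
    split; last first.
      by have := congr1 (fun f : {ffun 'I_n -> option A} => f lo) e; rewrite !ffunE hL ltnSn => -[->].
    apply/eqP/ffunP => q; have := congr1 (fun f : {ffun 'I_n -> option A} => f q) e; rewrite !ffunE.
    by case: (boolP (q < L)%N) => h //; rewrite ltnS (ltnW h).
  apply/ffunP => q; rewrite !ffunE; case: (ltngtP q L) => h.
  - have := congr1 (fun f : {ffun 'I_n -> option A} => f q) e1; rewrite !ffunE h => ->.
    by rewrite ltnS (ltnW h).
  - by rewrite ltnS leqNgt h.
  - rewrite h ltnSn; have -> : q = lo by apply: val_inj; rewrite /= h.
    by rewrite e2.
by rewrite hL; do ![case: (_ == _)].
Qed.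

Lemma stepC (lo : 'I_n) :
  cmi P Yk (Xrv lo) (fun w => (E w, memUp w k lo)) <=
  cmi P Yk (Gl lo) (fun w => (E w, Gam lo w)).
Proof.
have n0 : (0 < n)%N by apply: leq_ltn_trans (ltn_ord lo).
have lon := ltn_ord lo.
have ci : cmi P (Gam lo) (Xrv lo) (fun w => (E w, memUp w k lo)) = 0.
  apply: (ci_seg (l := lo) (j := n - 1) (m := (k * n - 1)%N)).
  - by lia.
  - by lia.
  - by lia.
  - apply: dep_pair; first by move=> w w' e1 _; rewrite e1.
    apply: dep_map => q; rewrite mem_iota => hq.
    by apply: dep_memUpTo => i' hi'; nia.
  - exact: dep_X.
  - apply: dep_pair; first by apply: dep_Es; nia.
    by apply: dep_memUpTo => i' hi'; nia.
  - move=> w1 w2; rewrite /Gam; congr (_, _).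
      apply/ffunP => q; rewrite !ffunE /mix /= ?ffunE.
      by case: ifP => // h; have -> : (lo <= q <= n - 1)%N = false by lia.
    apply/eq_in_map => q; rewrite mem_iota => hq.
    by apply: bob_memUpTo; lia.
  - by move=> w1 w2; apply: alice_X; lia.
  - apply: bob_pair; first by apply: bob_Es; lia.
    by apply: bob_memUpTo; lia.
  - move=> w1 w2 e a ha.
    move: (congr1 fst e) (congr1 snd e) => /= eE eW; split => h.
      exact: (memUpTo_eq eW).
    have ha1 : (a.+1 < k)%N by nia.
    have := Es_eq eE ha1; rewrite /memEnd /=.
    by have -> : (n - 1).+1 = n by lia.
apply: le_trans (cmi_addcond P_ge0 _ ci) _.
have e : cmi P Yk (Xrv lo) (fun w => ((E w, memUp w k lo), Gam lo w)) =
         cmi P Yk (Xrv lo) (fun w => (E w, Gam lo w)).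
  apply: (cmi_congr P_ge0) => // w w'.
  have key : E w' == E w -> Gam lo w' == Gam lo w -> memUp w' k lo == memUp w k lo.
    case: (posnP lo) => [l0|lp].
      by rewrite l0 !memUpTo0.
    move=> _ /eqP /(congr1 snd) /=.
    rewrite -(prednK lp) iota1S !map_rcons => /eqP; rewrite eqseq_rcons.
    by case/andP.
  rewrite (xpair_eqE (E w', memUp w' k lo)) !(xpair_eqE (E w')); move: key.
  case: (E w' == E w); case: (Gam lo w' == Gam lo w);
    case: (memUp w' k lo == memUp w k lo) => //=.
  by move=> /(_ isT isT).
rewrite e; exact: (cmi_monoV P_ge0).
Qed.

Lemma teleC L : (L <= n)%N ->
  cmi P Yk (Gam L) E = \sum_(lo < n | (lo < L)%N) cmi P Yk (Gl lo) (fun w => (E w, Gam lo w)).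
Proof.
elim: L => [|L IH] hL.
  rewrite big_pred0 //; rewrite (cmi_sym P_ge0); apply: (cmi_constU P_ge0) => w w'.
  by rewrite /Gam; congr (_, _); apply/ffunP => q; rewrite !ffunE.
have hLn : (L < n)%N by lia.
rewrite (bigD1 (Ordinal hLn)) //= addrC.
have -> : \sum_(i < n | (i < L.+1)%N && (i != Ordinal hLn))
     cmi P Yk (Gl i) (fun w => (E w, Gam i w)) =
   \sum_(lo < n | (lo < L)%N) cmi P Yk (Gl lo) (fun w => (E w, Gam lo w)).
  apply: eq_bigl => i; rewrite ltnS leq_eqVlt.
  case: (eqVneq i (Ordinal hLn)) => [->|ne] /=; first by rewrite eqxx ltnn.
  have : (i : nat) != L by apply: contra ne => /eqP h; apply/eqP/val_inj.
  by move/negbTE => ->; rewrite andbT.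
rewrite -IH; last by lia.
have e : cmi P Yk (Gam L.+1) E = cmi P Yk (fun w => (Gam L w, Gl (Ordinal hLn) w)) E.
  apply: (cmi_congr P_ge0) => // w w'; rewrite (GamS (lo := Ordinal hLn)) //.
by rewrite e (cmi_chain2 P_ge0).
Qed.

Lemma partC s : (#|S| <= 2 ^ s)%N ->
  \sum_(lo < n | (lo <= j)%N) cmi P Yk (Xrv lo) (fun w => (E w, memUp w k lo))
  <= (k * s)%:R.
Proof.
move=> hs.
apply: (@le_trans _ _ (\sum_(lo < n | (lo < J)%N) cmi P Yk (Gl lo) (fun w => (E w, Gam lo w)))).
  by apply: ler_sum => lo _; exact: stepC.
rewrite -teleC //.
apply: le_trans (cmi_le_ent P_ge0 _ _ _ mass1) _.
rewrite (@ent_congr _ _ _ _ _ Yk (fun w => [ffun a : 'I_k => memw w a.+1 J])); last first.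
  move=> w w'; apply/eqP/eqP => [e|e].
    by apply/ffunP => a; rewrite !ffunE; apply: (memUpTo_eq e).
  rewrite /memUpTo; apply/eq_in_map => i; rewrite mem_iota => hi.
  have hk : (i.-1 < k)%N by lia.
  have := congr1 (fun f : {ffun 'I_k -> S} => f (Ordinal hk)) e; rewrite !ffunE /=.
  by rewrite prednK //; lia.
apply: le_trans (ent_bound P_ge0 _ mass1) _.
rewrite card_ffun card_ord.
have S0 : (0 < #|S|)%N by apply/card_gt0P; exists m0.
apply: (@le_trans _ _ (log2 (2 ^ (s * k))%:R)).
  apply: log2_le; first by rewrite ltr0n expn_gt0 S0.
  rewrite ler_nat expnM; case: (posnP k) => [->|k0]; first by rewrite !expn0.
  by rewrite leq_exp2r.
rewrite /log2 natrX lnXn ?ltr0n // -[ln 2 *+ _]mulr_natr mulrAC divff.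
  by rewrite mul1r mulnC.
by rewrite gt_eqF // ln2_gt0.
Qed.

End PartC.

End Conc.


Unset Implicit Arguments. Set Strict Implicit.


Theorem lemma3p5 (R : realType) (A S : finType) (k n : nat) (m0 : S)
    (mu : 'I_n -> A -> R) (T : 'I_k -> 'I_n -> S -> A -> S -> R) :
  (0 < k)%N ->
  (forall l, is_distr (mu l)) ->
  (forall i j, is_kernel (T i j)) ->
  [/\ MIC m0 mu T >= MIC_first m0 mu T,
      MIC_first m0 mu T >= MIC_cond m0 mu T
    & forall s : nat, (#|S| <= 2 ^ s)%N ->
        MIC_cond m0 mu T <= (k * s * n)%:R].
Proof.
move=> k0 hmu hT.
have Pge0 := P_ge0 m0 hmu hT.
split.
- rewrite /MIC /MIC_first lerDl; apply: sumr_ge0 => i _; apply: sumr_ge0 => j _.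
  by apply: sumr_ge0 => l _; apply: cmi_ge0.
- rewrite /MIC_cond /MIC_first [X in _ <= X]exchange_big /=; apply: ler_sum => j _.
  rewrite [X in _ <= X]exchange_big /=; apply: ler_sum => l hl.
  exact: (partB m0 hmu hT (lo := l) (erefl _) hl (ltn_ord j)).
- move=> s hs; rewrite /MIC_cond.
  apply: (@le_trans _ _ (\sum_(j < n) (k * s)%:R)).
    apply: ler_sum => j _; exact: (partC m0 hmu hT (ltn_ord j) hs).
  by rewrite sumr_const card_ord -mulrnA.
Qed.
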